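(* Let $G_1=(V,D_1)$ and $G_2=(V,D_2)$ be simple directed graphs on the same node set $V$, neither of which is complete. Suppose they have the same out-degree sequence, meaning $|\mathrm{ch}_1(v)|=|\mathrm{ch}_2(v)|$ for every $v\in V$, and that $D_1\neq D_2$. If one of the graphs is acyclic, then there exist $k\in\{1,2\}$, a node $i\in V$, and a set $L$ that is parentally closed with respect to $i$ in $G_k$ such that $|\mathrm{ch}_k(i)\cap L|>|\mathrm{ch}_{3-k}(i)\cap L|$.
   Context: A directed graph $G=(V,D)$ has edge set $D\subseteq V\times V$ of ordered pairs $(i,j)$, $i\neq j$. It is simple if $(i,j)$ and $(j,i)$ are never both in $D$. It is complete if every pair of distinct nodes is adjacent. $\mathrm{ch}_k(i)$ and $\mathrm{pa}_k(i)$ are the children and parents of $i$ in $G_k$, and $\mathrm{ne}_k(i)$ is the set of nodes adjacent to $i$ in $G_k$. For a set $L$ of nodes, $\mathrm{pa}_k(L)=\bigcup_{l\in L}\mathrm{pa}_k(l)$. A subset $L\subseteq\mathrm{ne}_k(i)$ is parentally closed with respect to $i$ in $G_k$ if $\mathrm{pa}_k(L)\cap\mathrm{ne}_k(i)\subseteq L$. *)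

(* Defs.v *)
From mathcomp Require Import all_boot.
Set Implicit Arguments. Unset Strict Implicit. Unset Printing Implicit Defensive.

Section DiGraph.
Variable T : finType.
Implicit Types (D : {set T * T}) (i j : T) (L : {set T}).

Definition loopless D : Prop := forall i, (i, i) \notin D.

Definition simple_digraph D : Prop :=
  forall i j, ~ ((i, j) \in D /\ (j, i) \in D).

Definition complete_digraph D : Prop :=
  forall i j, i != j -> (i, j) \in D \/ (j, i) \in D.

Definition ch D i : {set T} := [set j | (i, j) \in D].
Definition pa D i : {set T} := [set j | (j, i) \in D].
Definition ne D i : {set T} := ch D i :|: pa D i.
Definition paS D L : {set T} := \bigcup_(l in L) pa D l.

Definition parentally_closed D i L : Prop :=
  L \subset ne D i /\ (paS D L :&: ne D i) \subset L.

Definition edge_rel D : rel T := fun x y => (x, y) \in D.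

Definition acyclic D : Prop :=
  forall i j, (i, j) \in D -> ~~ connect (edge_rel D) j i.
End DiGraph.

(* Main.v *)
Require Import Defs.
From mathcomp Require Import all_boot.

Section Aux.
Variable T : finType.

Lemma no_inf (D : {set T * T}) (S : {set T}) : acyclic D -> S != set0 ->
  (forall x, x \in S -> exists2 y, y \in S & (x, y) \in D) -> False.
Proof.
move=> Hac /set0Pn [x0 Sx0] H.
pose desc x := [set z | connect (edge_rel D) x z].
case: (arg_minnP (fun x => #|desc x|) Sx0) => x Sx Hmin.
have [y Sy Dxy] := H x Sx.
have := Hmin y Sy; apply/negP; rewrite -ltnNge; apply: proper_card.
apply/properP; split.
  apply/subsetP => z; rewrite !inE => Hz.
  exact: connect_trans (connect1 Dxy) Hz.
exists x; rewrite !inE ?connect0 //.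
exact: Hac.
Qed.
End Aux.

Theorem theorem4p13 (T : finType) (D1 D2 : {set T * T}) :
  loopless D1 -> loopless D2 ->
  simple_digraph D1 -> simple_digraph D2 ->
  ~ complete_digraph D1 -> ~ complete_digraph D2 ->
  (forall v : T, #|ch D1 v| = #|ch D2 v|) ->
  D1 <> D2 ->
  acyclic D1 \/ acyclic D2 ->
  (exists (i : T) (L : {set T}), parentally_closed D1 i L /\
      #|ch D1 i :&: L| > #|ch D2 i :&: L|) \/
  (exists (i : T) (L : {set T}), parentally_closed D2 i L /\
      #|ch D2 i :&: L| > #|ch D1 i :&: L|).
Proof.
move=> _ _ Si1 Si2 _ _ Hdeg Hne Hac.
case: (boolP [exists i, ~~ (ch D2 i \subset ne D1 i)]) => [/existsP [i Hi]|H1].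
  left; exists i, (ne D1 i); split; first by split; [exact: subxx | exact: subsetIr].
  rewrite (setIidPl (subsetUl _ _)) Hdeg; apply: proper_card.
  apply/properP; split; first exact: subsetIl.
  have [j Hj1 Hj2] := subsetPn Hi.
  by exists j => //; rewrite inE (negbTE Hj2) andbF.
case: (boolP [exists i, ~~ (ch D1 i \subset ne D2 i)]) => [/existsP [i Hi]|H2].
  right; exists i, (ne D2 i); split; first by split; [exact: subxx | exact: subsetIr].
  rewrite (setIidPl (subsetUl _ _)) -Hdeg; apply: proper_card.
  apply/properP; split; first exact: subsetIl.
  have [j Hj1 Hj2] := subsetPn Hi.
  by exists j => //; rewrite inE (negbTE Hj2) andbF.
exfalso.
rewrite negb_exists in H1; move/forallP: H1 => H1.
rewrite negb_exists in H2; move/forallP: H2 => H2.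
have s12 : forall i j, (i, j) \in D1 -> ((i, j) \in D2) || ((j, i) \in D2).
  move=> i j Hij; have /subsetP := negbNE (H2 i).
  by move/(_ j); rewrite !inE; apply.
have s21 : forall i j, (i, j) \in D2 -> ((i, j) \in D1) || ((j, i) \in D1).
  move=> i j Hij; have /subsetP := negbNE (H1 i).
  by move/(_ j); rewrite !inE; apply.
pose Rout i := [set j | ((i, j) \in D1) && ((j, i) \in D2)].
pose Rin i := [set j | ((i, j) \in D2) && ((j, i) \in D1)].
have Hcard : forall i, #|Rout i| = #|Rin i|.
  move=> i.
  have E1 : ch D1 i :\: ch D2 i = Rout i.
    apply/setP => j; rewrite !inE.
    case E: ((i, j) \in D1); last by rewrite andbF.
    have := s12 _ _ E; case F: ((i, j) \in D2) => //= _.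
    by case G: ((j, i) \in D2) => //; exfalso; apply: (Si2 i j).
  have E2 : ch D2 i :\: ch D1 i = Rin i.
    apply/setP => j; rewrite !inE.
    case E: ((i, j) \in D2); last by rewrite andbF.
    have := s21 _ _ E; case F: ((i, j) \in D1) => //= _.
    by case G: ((j, i) \in D1) => //; exfalso; apply: (Si1 i j).
  have := cardsID (ch D2 i) (ch D1 i); have := cardsID (ch D1 i) (ch D2 i).
  rewrite E1 E2 setIC Hdeg => <- /eqP; by rewrite eqn_add2l => /eqP.
pose S := [set x | Rout x != set0].
have HS : forall x, (x \in S) = (Rin x != set0).
  by move=> x; rewrite inE -!card_gt0 Hcard.
have Sne : S != set0.
  case: (boolP [exists p, (p \in D1) != (p \in D2)]) => [/existsP [[a b] Hp]|Hn]; last first.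
    exfalso; apply: Hne; apply/setP => p.
    rewrite negb_exists in Hn; move/forallP: Hn => /(_ p).
    by rewrite negbK => /eqP.
  case E1: ((a, b) \in D1) Hp; case E2: ((a, b) \in D2) => //= _.
    apply/set0Pn; exists a; rewrite inE; apply/set0Pn; exists b.
    by rewrite inE E1 /=; have := s12 _ _ E1; rewrite E2.
  apply/set0Pn; exists b; rewrite inE; apply/set0Pn; exists a.
  by rewrite inE /=; have := s21 _ _ E2; rewrite E1 /= => ->.
case: Hac => Hac.
  apply: (@no_inf _ _ S Hac Sne) => x; rewrite inE => /set0Pn [y]; rewrite inE => /andP [h1 h2].
  exists y => //; rewrite HS; apply/set0Pn; exists x; by rewrite inE h1 h2.
apply: (@no_inf _ _ S Hac Sne) => x; rewrite HS => /set0Pn [y]; rewrite inE => /andP [h1 h2].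
exists y => //; rewrite inE; apply/set0Pn; exists x; by rewrite inE h1 h2.
Qed.
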